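(* Let $G\in\mathcal{G}$ be a graph, let $t\in T_G$, and let $\epsilon$ be an internal edge of the binary tree $t$. Then there exist a unique tree $t'\in T_G$ with $t'\neq t$ and a unique internal edge $\epsilon'$ of $t'$ such that $t/\epsilon=t'/\epsilon'$ (equality of trees with leaves labeled by the vertices of $G$).
   Context: A graph is a triple $(\Gamma,\sigma,\lambda)$: a finite set $\Gamma$ of flags (half-edges), an involution $\sigma$ of $\Gamma$ (two-element orbits are edges, fixed points are legs), and a partition $\lambda$ of $\Gamma$ whose blocks are the vertices. $\mathcal{G}$ denotes the set of isomorphism classes of directed, connected graphs with labeled input and output legs and without directed cycles (directed: each vertex's flags are split into inputs and outputs, and each edge joins an output flag to an input flag). For two vertices $v,v'$, the thick edge from $v$ to $v'$ is the set of all directed edges from $v$ to $v'$; a directed path/cycle is a sequence of thick edges following directions. Contracting a thick edge $\epsilon$ between $v_i,v_j$ gives the graph $G/\epsilon$ in which $v_i,v_j$ are replaced by the single vertex $(v_i\sqcup v_j)\smallsetminus\{\text{flags of }\epsilon\}$; $\epsilon$ is admissible if $G/\epsilon$ has no directed cycles. For $G$ with $k$ vertices, a contraction sequence is a sequence of $k-1$ thick edges, each admissible in the graph obtained by contracting the previous ones, thus reducing $G$ to a one-vertex graph. To a contraction sequence one associates a binary rooted tree whose leaves are labeled by the vertices of $G$ and whose internal vertices correspond to the successive contractions (the vertex for the $i$-th contraction has as children the subtrees corresponding to the two vertices merged). $T_G$ is the set of such binary trees arising from contraction sequences of $G$ (equivalently, contraction sequences modulo the equivalence identifying sequences with isomorphic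 associated trees). An internal edge of $t$ is an edge between two internal vertices of $t$; $t/\epsilon$ denotes the (no longer binary) tree obtained by contracting it. *)

(* Defs.v *)
From HB Require Import structures.
From mathcomp Require Import all_boot.

Set Implicit Arguments.
Unset Strict Implicit.
Unset Printing Implicit Defensive.

(* Graphs (Gamma, sigma, lambda) with a direction on flags.                  *)
(*   vert G : the vertices, i.e. the blocks of lambda; lam f is the block     *)
(*            containing f (lam is required to be surjective: blocks are     *)
(*            nonempty)                                                      *)
(*   sigma  : the involution (2-orbits = edges, fixed points = legs)         *)
Record dgraph := DGraph {
  flag : finType;
  vert : finType;
  sigma : flag -> flag;
  lam : flag -> vert;
  is_out : pred flag
}.

Section Graphs.
Variable G : dgraph.

Definition involutive_sigma := forall f : flag G, sigma (sigma f) = f.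
Definition lam_surjective := forall v : vert G, exists f, lam f = v.
Definition edges_directed :=
  forall f : flag G, sigma f != f -> is_out f != is_out (sigma f).

Definition gedge : rel (vert G) := fun u v =>
  [exists f : flag G, [&& sigma f != f, is_out f, lam f == u & lam (sigma f) == v]].

(* no directed cycle (a self-loop counts as a directed cycle) *)
Definition g_acyclic := forall u v, gedge u v -> ~~ connect gedge v u.
Definition g_connected :=
  forall u v, connect (fun x y => gedge x y || gedge y x) u v.

(* G belongs to the class \mathcal{G} (leg labelings are irrelevant here) *)
Definition in_calG :=
  [/\ involutive_sigma, lam_surjective, edges_directed, g_connected & g_acyclic].

(* Graphs obtained from G by successive contractions of thick edges.          *)
(* Such a graph is described by the partition P of vert G into the sets of     *)
(* original vertices that have been merged.  Its edges are the edges of G     *)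
(* joining different blocks (edges inside a block are exactly the flags of    *)
(* the contracted thick edges).                                              *)
Definition partition_graph := {set {set vert G}}.

Definition qedge (P : partition_graph) : rel {set vert G} := fun A B =>
  [&& A \in P, B \in P, A != B &
      [exists f : flag G,
         [&& sigma f != f, is_out f, lam f \in A & lam (sigma f) \in B]]].

Definition q_acyclic (P : partition_graph) :=
  [forall A, forall B, qedge P A B ==> ~~ connect (qedge P) B A].

Definition merge (P : partition_graph) (A B : {set vert G}) : partition_graph :=
  (P :\ A :\ B) :|: [set A :|: B].

Definition P0 : partition_graph := [set [set v] | v : vert G].

Fixpoint is_cseq (P : partition_graph) (s : seq ({set vert G} * {set vert G}))
  : bool :=
  match s with
  | [::] => #|P| == 1
  | (A, B) :: s' =>
      [&& qedge P A B, q_acyclic (merge P A B) & is_cseq (merge P A B) s']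
  end.

(* Rooted trees with leaves labeled (bijectively) by vert G and with all     *)
(* internal vertices of out-degree >= 2 are represented, up to isomorphism   *)
(* of leaf-labeled trees, by their set of clusters: the set of leaf-label     *)
(* sets of the subtrees rooted at each vertex.  Leaves are the singleton      *)
(* clusters, internal vertices the clusters of size >= 2.                     *)
Definition ltree := {set {set vert G}}.

(* binary tree associated to a contraction sequence: one leaf per vertex,     *)
(* and the internal vertex of the i-th contraction has as leaf set the union  *)
(* of the two merged vertices.                                              *)
Definition tree_of (s : seq ({set vert G} * {set vert G})) : ltree :=
  P0 :|: [set X in [seq p.1 :|: p.2 | p <- s]].

Definition in_TG (t : ltree) := exists s, is_cseq P0 s /\ tree_of s = t.

Definition tedge (t : ltree) (P C : {set vert G}) :=
  [&& P \in t, C \in t, C \proper P &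
      [forall X in t, ~~ ((C \proper X) && (X \proper P))]].

(* internal edge: both endpoints internal (the parent is then automatically  *)
(* internal)                                                                 *)
Definition internal_edge (t : ltree) (P C : {set vert G}) :=
  tedge t P C && (1 < #|C|) && (1 < #|P|).

(* t / (P, C): contracting the edge removes the vertex C, its children       *)
(* becoming children of P.                                                  *)
Definition contract (t : ltree) (C : {set vert G}) : ltree := t :\ C.

End Graphs.

(* Main.v *)
Require Import Defs.
From mathcomp Require Import all_boot.
From mathcomp Require Import zify.
Set Implicit Arguments.
Unset Strict Implicit.
Unset Printing Implicit Defensive.

Notation mrg := Defs.merge.
Section S.
Variable G : dgraph.
Local Notation V := (vert G).
Local Notation sT := {set V}.

Definition ee (X Y : sT) := [exists f : flag G,
  [&& sigma f != f, is_out f, lam f \in X & lam (sigma f) \in Y]].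

Lemma qedgeE (R : {set sT}) X Y : qedge R X Y = [&& X \in R, Y \in R, X != Y & ee X Y].
Proof. by []. Qed.

Lemma eeU1 (X Y Z : sT) : ee (X :|: Y) Z = ee X Z || ee Y Z.
Proof.
apply/existsP/orP => [[f]|[]/existsP[f]].
  rewrite in_setU => /and4P[a b /orP[c|c] d]; [left|right]; apply/existsP; exists f; exact/and4P.
  move=> /and4P[a b c d]; exists f; rewrite in_setU c ?orbT; exact/and4P.
move=> /and4P[a b c d]; exists f; rewrite in_setU c ?orbT; exact/and4P.
Qed.

Lemma eeU2 (X Y Z : sT) : ee Z (X :|: Y) = ee Z X || ee Z Y.
Proof.
apply/existsP/orP => [[f]|[]/existsP[f]].
  rewrite in_setU => /and4P[a b c /orP[d|d]]; [left|right]; apply/existsP; exists f; exact/and4P.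
  move=> /and4P[a b c d]; exists f; rewrite in_setU d ?orbT; exact/and4P.
move=> /and4P[a b c d]; exists f; rewrite in_setU d ?orbT; exact/and4P.
Qed.

Lemma ee_mono (X Y X' Y' : sT) : X \subset X' -> Y \subset Y' -> ee X Y -> ee X' Y'.
Proof.
move=> /subsetP h1 /subsetP h2 /existsP[f /and4P[a b c d]].
apply/existsP; exists f; rewrite a b h1 // h2 //.
Qed.

Lemma disjP (X Y : sT) : reflect (forall x, x \in X -> x \in Y -> False) [disjoint X & Y].
Proof.
apply: (iffP idP) => [h x hx hy | h]; first by rewrite (disjointFr h hx) in hy.
rewrite disjoint_subset; apply/subsetP => x hx; rewrite inE; apply/negP; exact: h.
Qed.

Lemma disjS (X Y : sT) x : [disjoint X & Y] -> x \in X -> x \in Y -> False.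
Proof. by move/disjP; apply. Qed.

Definition part (R : {set sT}) :=
  (forall X, X \in R -> X != set0) /\
  (forall X Y, X \in R -> Y \in R -> X != Y -> [disjoint X & Y]).

Definition nocyc2 (R : {set sT}) := forall X Y, qedge R X Y -> ~~ qedge R Y X.

Fixpoint valid (R : {set sT}) (s : seq (sT * sT)) : bool :=
  match s with
  | [::] => true
  | (A, B) :: s' => [&& qedge R A B, q_acyclic (mrg R A B) & valid (mrg R A B) s']
  end.

Definition run (R : {set sT}) (s : seq (sT * sT)) :=
  foldl (fun R p => mrg R p.1 p.2) R s.

Lemma run_cons R p s : run R (p :: s) = run (mrg R p.1 p.2) s.
Proof. by []. Qed.

Lemma run_cat R s1 s2 : run R (s1 ++ s2) = run (run R s1) s2.
Proof. by rewrite /run foldl_cat. Qed.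

Lemma valid_cons R p s : valid R (p :: s) =
  [&& qedge R p.1 p.2, q_acyclic (mrg R p.1 p.2) & valid (mrg R p.1 p.2) s].
Proof. by case: p. Qed.

Lemma valid_cat R s1 s2 : valid R (s1 ++ s2) = valid R s1 && valid (run R s1) s2.
Proof.
elim: s1 R => [|p s1 IH] R //.
by rewrite cat_cons !valid_cons IH run_cons !andbA.
Qed.

Lemma is_cseqE R s : is_cseq R s = valid R s && (#|run R s| == 1).
Proof.
elim: s R => [|[A B] s IH] R //=.
by rewrite IH !andbA.
Qed.

Definition F (R : {set sT}) (s : seq (sT * sT)) :=
  R :|: [set X in [seq p.1 :|: p.2 | p <- s]].

Lemma tree_ofE s : tree_of s = F (P0 G) s.
Proof. by []. Qed.

Lemma F_cons R p s : F R (p :: s) = R :|: F (mrg R p.1 p.2) s.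
Proof.
apply/setP=> Z; rewrite /F /Defs.merge !inE /=.
by case: (Z \in R); case: (Z == p.1 :|: p.2); rewrite ?orbT ?andbF.
Qed.

Lemma inF_cons R p s Z : (Z \in F R (p :: s)) = (Z \in R) || (Z \in F (mrg R p.1 p.2) s).
Proof. by rewrite F_cons in_setU. Qed.

Lemma run_subF R s : run R s \subset F R s.
Proof.
elim: s R => [|p s IH] R; first by rewrite /F subsetUl.
rewrite run_cons F_cons; apply: subset_trans (IH _) _; exact: subsetUr.
Qed.

Lemma merge_part R A B : part R -> A \in R -> B \in R -> A != B -> part (mrg R A B).
Proof.
move=> [h1 h2] hA hB nAB; split.
  move=> X; rewrite /Defs.merge !inE => /orP[/and3P[_ _ /h1//]|/eqP->].
  by rewrite setU_eq0 negb_and h1.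
have key : forall X, X \in R -> X != A -> X != B -> [disjoint X & A :|: B].
  move=> X hX xa xb; apply/disjP => x hx; rewrite inE => /orP[] hy.
    exact: (disjS (h2 _ _ hX hA xa) hx hy).
  exact: (disjS (h2 _ _ hX hB xb) hx hy).
move=> X Y; rewrite /Defs.merge !inE => /orP[/and3P[xb xa hX]|/eqP->] /orP[/and3P[yb ya hY]|/eqP->].
- exact: h2.
- by move=> _; rewrite key.
- by move=> _; rewrite disjoint_sym key.
- by rewrite eqxx.
Qed.

Lemma valid_part R s : valid R s -> part R -> part (run R s).
Proof.
elim: s R => [|[A B] s IH] R //= /and3P[/and4P[hA hB nAB _] _ hv] hp.
exact/IH/merge_part.
Qed.


Lemma mrgE (R : {set sT}) A B X :
  (X \in mrg R A B) = [&& X != B, X != A & X \in R] || (X == A :|: B).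
Proof. by rewrite /Defs.merge !inE. Qed.

Lemma qacyc_nocyc R : q_acyclic R -> nocyc2 R.
Proof.
move=> /forallP h X Y hXY; apply/negP => hYX.
by move: (h X) => /forallP/(_ Y); rewrite hXY /= (connect1 hYX).
Qed.

Lemma P0_part : part (P0 G).
Proof.
split.
  move=> X /imsetP[v _ ->]; apply/negP => /eqP h.
  by have := set11 v; rewrite h inE.
move=> X Y /imsetP[u _ ->] /imsetP[v _ ->] nuv; apply/disjP => x.
by rewrite !inE => /eqP-> /eqP e; rewrite e eqxx in nuv.
Qed.

Lemma ee1 u v : ee [set u] [set v] = gedge u v.
Proof. by apply: eq_existsb => f; rewrite !in_set1. Qed.

Lemma P0_nocyc : g_acyclic G -> nocyc2 (P0 G).
Proof.
move=> hg X Y; rewrite !qedgeE => /and4P[/imsetP[u _ ->] /imsetP[v _ ->] _].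
rewrite ee1 => huv; apply/negP => /and4P[_ _ _]; rewrite ee1 => hvu.
by have := hg _ _ huv; rewrite (connect1 hvu).
Qed.

Lemma valid_nocyc R s : valid R s -> nocyc2 R -> nocyc2 (run R s).
Proof.
elim: s R => [|[A B] s IH] R //= /and3P[_ hq hv] _.
exact/IH/qacyc_nocyc.
Qed.

Definition lam3 (X Y : sT) := [|| X \subset Y, Y \subset X | [disjoint X & Y]].

Lemma F_lam_inv R s : valid R s -> part R -> forall Z, Z \in F R s ->
  forall X, X \in R -> (X \subset Z) || [disjoint X & Z].
Proof.
elim: s R => [|[A B] s IH] R.
  move=> _ [_ hp] Z; rewrite /F inE => /orP[hZ|]; last by rewrite inE.
  move=> X hX; case: (eqVneq X Z) => [->|ne]; first by rewrite subxx.
  by rewrite hp ?orbT.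
move=> /= /and3P[/and4P[hA hB nAB hAB] hq hv] hpR.
have hpM := merge_part hpR hA hB nAB.
move=> Z; rewrite inF_cons => /orP[hZ|hZ] X hX.
  case: (eqVneq X Z) => [->|ne]; first by rewrite subxx.
  by rewrite hpR.2 ?orbT.
have IH' := IH _ hv hpM Z hZ.
have hU : A :|: B \in mrg R A B by rewrite mrgE eqxx orbT.
case: (eqVneq X A) => [eXA|nXA]; last case: (eqVneq X B) => [eXB|nXB].
- have /orP[h|h] := IH' (A :|: B) hU.
    by rewrite eXA (subset_trans (subsetUl _ _) h).
  by rewrite eXA (disjointWl (subsetUl _ _) h) orbT.
- have /orP[h|h] := IH' (A :|: B) hU.
    by rewrite eXB (subset_trans (subsetUr _ _) h).
  by rewrite eXB (disjointWl (subsetUr _ _) h) orbT.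
apply: IH'; by rewrite mrgE nXA nXB hX.
Qed.

Lemma F_laminar R s : valid R s -> part R -> forall X Y, X \in F R s -> Y \in F R s -> lam3 X Y.
Proof.
elim: s R => [|[A B] s IH] R hv hp X Y.
  rewrite /F !inE /= !orbF => hX hY; case: (eqVneq X Y) => [->|ne]; first by rewrite /lam3 subxx.
  by rewrite /lam3 hp.2 ?orbT.
move=> hX hY; have hX' := hX; have hY' := hY.
move: hX hY; rewrite !inF_cons => /orP[hX|hX] /orP[hY|hY].
- have /orP[h|h] := F_lam_inv hv hp hY' hX; by rewrite /lam3 h ?orbT.
- have /orP[h|h] := F_lam_inv hv hp hY' hX; by rewrite /lam3 h ?orbT.
- have /orP[h|h] := F_lam_inv hv hp hX' hY; rewrite /lam3; [by rewrite h orbT | by rewrite disjoint_sym h !orbT].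
move: hv => /= /and3P[/and4P[hA hB nAB _] _ hv].
exact: (IH _ hv (merge_part hp hA hB nAB)).
Qed.

Lemma F_nonempty R s : valid R s -> part R -> forall Z, Z \in F R s -> Z != set0.
Proof.
elim: s R => [|[A B] s IH] R hv hp Z.
  by rewrite /F !inE /= orbF => /hp.1.
rewrite inF_cons => /orP[/hp.1 //|].
move: hv => /= /and3P[/and4P[hA hB nAB _] _ hv].
exact: (IH _ hv (merge_part hp hA hB nAB)).
Qed.

Lemma F_cat_l R s1 s2 : F R s1 \subset F R (s1 ++ s2).
Proof.
apply/subsetP => Z; rewrite /F !inE => /orP[->//|h].
by rewrite map_cat mem_cat h !orbT.
Qed.

Lemma find_step R s Z : Z \in F R s -> Z \notin R ->
  exists s1 p s2, s = s1 ++ p :: s2 /\ Z = p.1 :|: p.2.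
Proof.
rewrite /F inE => /orP[->//|]; rewrite inE => /mapP[p hp ->] _.
case/splitPr: hp => s1 s2; by exists s1, p, s2.
Qed.

Lemma step_props R s1 p s2 : valid R (s1 ++ p :: s2) -> part R -> nocyc2 R ->
  let Q := run R s1 in
  [/\ part Q, p.1 \in Q, p.2 \in Q & p.1 != p.2] /\ (ee p.1 p.2 /\ ~~ ee p.2 p.1)
  /\ (p.1 \in F R (s1 ++ p :: s2) /\ p.2 \in F R (s1 ++ p :: s2)).
Proof.
rewrite valid_cat => /andP[hv1 hv2] hp hn Q.
have hpQ : part Q := valid_part hv1 hp.
have hnQ : nocyc2 Q := valid_nocyc hv1 hn.
move: hv2; rewrite valid_cons => /and3P[hq _ _].
have hq' := hq; move: hq' => /and4P[h1 h2 h12 e12].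
have ne21 : ~~ ee p.2 p.1.
  apply/negP => e21; have := hnQ _ _ hq; by rewrite qedgeE h1 h2 eq_sym h12 e21.
have sub : Q \subset F R (s1 ++ p :: s2) := subset_trans (run_subF R s1) (F_cat_l _ _ _).
split => //; split => //; split; exact: (subsetP sub).
Qed.

Lemma card_P0 X : X \in P0 G -> #|X| = 1.
Proof. by move=> /imsetP[v _ ->]; rewrite cards1. Qed.

Lemma tg_struct (t : ltree G) : g_acyclic G -> in_TG t -> forall Z, Z \in t -> 1 < #|Z| ->
  exists Y W, [/\ Y \in t, W \in t & Y :|: W = Z] /\
     [/\ [disjoint Y & W], Y != set0, W != set0 & ee Y W && ~~ ee W Y].
Proof.
move=> hg [s [hs <-]] Z hZ hc.
have hnP : Z \notin P0 G by apply/negP => /card_P0 h; rewrite h in hc.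
have [s1 [p [s2 [es ->]]]] := find_step hZ hnP.
move: hs; rewrite is_cseqE => /andP[hv _].
move: hv; rewrite es => hv.
have [[hpQ h1 h2 h12] [[e12 n21] [f1 f2]]] := step_props hv P0_part (P0_nocyc hg).
exists p.1, p.2; rewrite tree_ofE; split => //; split => //.
- exact: hpQ.2.
- exact: hpQ.1.
- exact: hpQ.1.
- by rewrite e12.
Qed.

Lemma tg_laminar (t : ltree G) : in_TG t -> forall X Y, X \in t -> Y \in t -> lam3 X Y.
Proof.
move=> [s [hs <-]]; move: hs; rewrite is_cseqE => /andP[hv _].
exact: (F_laminar hv P0_part).
Qed.

Lemma tg_nonempty (t : ltree G) : in_TG t -> forall X, X \in t -> X != set0.
Proof.
move=> [s [hs <-]]; move: hs; rewrite is_cseqE => /andP[hv _].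
exact: (F_nonempty hv P0_part).
Qed.

Lemma acyc_rank R : q_acyclic R -> exists r : sT -> nat, forall X Y, qedge R X Y -> r X < r Y.
Proof.
move=> /forallP h.
exists (fun X => #|[set Z | connect (qedge R) Z X]|) => X Y hXY.
apply: proper_card; apply/properP; split.
  apply/subsetP => Z; rewrite !inE => hZ.
  exact: (connect_trans hZ (connect1 hXY)).
exists Y; first by rewrite inE connect0.
by rewrite inE; move: (h X) => /forallP/(_ Y); rewrite hXY.
Qed.

Lemma path_rank (e : rel sT) (r : sT -> nat) :
  (forall X Y, e X Y -> r X < r Y) -> forall p X, path e X p -> r X <= r (last X p).
Proof.
move=> he; elim=> [|Y p IH] X //= /andP[hXY hp].
exact: leq_trans (ltnW (he _ _ hXY)) (IH _ hp).
Qed.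

Lemma rank_acyc R (r : sT -> nat) : (forall X Y, qedge R X Y -> r X < r Y) -> q_acyclic R.
Proof.
move=> hr; apply/forallP => X; apply/forallP => Y; apply/implyP => hXY.
apply/negP => /connectP[p hp hl].
have := path_rank hr hp; rewrite -hl => h.
by have := leq_trans (hr _ _ hXY) h; rewrite ltnn.
Qed.

Lemma sub_notin (R : {set sT}) (C X : sT) : part R -> C \in R -> X \subset C -> X != set0 -> X != C -> X \notin R.
Proof.
move=> hp hC hXC hX0 nXC; apply/negP => hX.
have hd := hp.2 _ _ hX hC nXC.
case/set0Pn: hX0 => x hx.
exact: (disjS hd hx (subsetP hXC _ hx)).
Qed.

Lemma neq_union (A B : sT) : B != set0 -> [disjoint A & B] -> A != A :|: B.
Proof.
move=> /set0Pn[b hb] hd; apply/negP => /eqP e.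
have : b \in A by rewrite e inE hb orbT.
move=> hbA; exact: (disjS hd hbA hb).
Qed.

Lemma neq_disj (A B : sT) : A != set0 -> [disjoint A & B] -> A != B.
Proof.
move=> /set0Pn[a ha] hd; apply/negP => /eqP e.
rewrite -e in hd; exact: (disjS hd ha ha).
Qed.

Definition splitS (R : {set sT}) (A B : sT) := (R :\ (A :|: B)) :|: [set A; B].

Lemma splitSE R A B Z : (Z \in splitS R A B) = [|| (Z != A :|: B) && (Z \in R), Z == A | Z == B].
Proof. by rewrite /splitS !inE. Qed.

Lemma split_acyclic R A B : part R -> A :|: B \in R -> A != set0 -> B != set0 ->
  [disjoint A & B] -> ~~ ee B A -> q_acyclic R -> q_acyclic (splitS R A B).
Proof.
move=> hp hC hA0 hB0 hd nBA /acyc_rank[r hr].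
set C := A :|: B in hC *.
have nAC : A != C := neq_union hB0 hd.
have nBC : B != C by rewrite /C setUC; apply: neq_union hA0 _; rewrite disjoint_sym.
have nAB : A != B := neq_disj hA0 hd.
have AnR : A \notin R := sub_notin hp hC (subsetUl _ _) hA0 nAC.
have BnR : B \notin R := sub_notin hp hC (subsetUr _ _) hB0 nBC.
pose r' := fun Z => if Z == A then 2 * r C else if Z == B then 2 * r C + 1 else 2 * r Z.
apply: (@rank_acyc _ r') => X Y.
rewrite qedgeE !splitSE => /and4P[hX hY nXY eXY].
have eAC : forall Y, ee A Y -> ee C Y by move=> Z; apply: ee_mono (subsetUl _ _) (subxx _).
have eBC : forall Y, ee B Y -> ee C Y by move=> Z; apply: ee_mono (subsetUr _ _) (subxx _).
have eCA : forall Y, ee Y A -> ee Y C by move=> Z; apply: ee_mono (subxx _) (subsetUl _ _).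
have eCB : forall Y, ee Y B -> ee Y C by move=> Z; apply: ee_mono (subxx _) (subsetUr _ _).
have gen : forall Z, Z \in R -> (Z == A) = false /\ (Z == B) = false.
  by move=> Z hZ; split; apply/negP => /eqP e; [rewrite -e hZ in AnR | rewrite -e hZ in BnR].
have nBA' : (B == A) = false by rewrite eq_sym (negbTE nAB).
rewrite /r'.
case/or3P: hX => [/andP[nXC hXR]|/eqP eXA|/eqP eXB];
case/or3P: hY => [/andP[nYC hYR]|/eqP eYA|/eqP eYB].
- have [n1 n2] := gen _ hXR; have [n3 n4] := gen _ hYR; rewrite n1 n2 n3 n4.
  have : r X < r Y by apply: hr; rewrite qedgeE hXR hYR nXY eXY.
  move=> hh; clear -hh; lia.
- have [n1 n2] := gen _ hXR; rewrite n1 n2 eYA eqxx.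
  have : r X < r C by apply: hr; rewrite qedgeE hXR hC nXC eCA // -eYA.
  move=> hh; clear -hh; lia.
- have [n1 n2] := gen _ hXR; rewrite n1 n2 eYB eqxx nBA'.
  have : r X < r C by apply: hr; rewrite qedgeE hXR hC nXC eCB // -eYB.
  move=> hh; clear -hh; lia.
- have [n3 n4] := gen _ hYR; rewrite eXA eqxx n3 n4.
  have : r C < r Y by apply: hr; rewrite qedgeE hC hYR eq_sym nYC eAC // -eXA.
  move=> hh; clear -hh; lia.
- by rewrite eXA eYA eqxx in nXY.
- rewrite eXA eYB !eqxx nBA' ?eqxx /=; clear; lia.
- have [n3 n4] := gen _ hYR; rewrite eXB eqxx n3 n4 nBA'.
  have : r C < r Y by apply: hr; rewrite qedgeE hC hYR eq_sym nYC eBC // -eXB.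
  move=> hh; clear -hh; lia.
- by rewrite eXB eYA in eXY; rewrite eXY in nBA.
- by rewrite eXB eYB eqxx in nXY.
Qed.

Lemma refine (R : {set sT}) s (X : sT) : X \in R -> exists2 Y, Y \in run R s & X \subset Y.
Proof.
elim: s R X => [|[A B] s IH] R X hX; first by exists X.
rewrite run_cons /=.
case: (eqVneq X A) => [eXA|nXA]; last case: (eqVneq X B) => [eXB|nXB].
- have hU : A :|: B \in mrg R A B by rewrite mrgE eqxx orbT.
  have [Y hY hs] := IH (mrg R A B) (A :|: B) hU.
  by exists Y => //; rewrite eXA (subset_trans (subsetUl _ _) hs).
- have hU : A :|: B \in mrg R A B by rewrite mrgE eqxx orbT.
  have [Y hY hs] := IH (mrg R A B) (A :|: B) hU.
  by exists Y => //; rewrite eXB (subset_trans (subsetUr _ _) hs).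
by apply: IH; rewrite mrgE nXA nXB hX.
Qed.

Lemma gone (R : {set sT}) (X Y : sT) s : part R -> X \in R -> Y \in R -> X != Y -> valid (mrg R X Y) s ->
  forall W, W \in R -> W \subset X :|: Y -> W != X :|: Y -> W \notin run (mrg R X Y) s.
Proof.
move=> hp hX hY nXY hv W hW hWs nWU.
have hU : X :|: Y \in mrg R X Y by rewrite mrgE eqxx orbT.
have [Z hZ hsZ] := refine s hU.
have hpr : part (run (mrg R X Y) s) := valid_part hv (merge_part hp hX hY nXY).
apply/negP => hWr.
case: (eqVneq W Z) => [eWZ|nWZ].
  by move: nWU; rewrite eqEsubset hWs eWZ hsZ.
have hd := hpr.2 _ _ hWr hZ nWZ.
case/set0Pn: (hp.1 _ hW) => w hw.
exact: (disjS hd hw (subsetP hsZ _ (subsetP hWs _ hw))).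
Qed.

Lemma split_run R s A B : valid R s -> part R -> A :|: B \in R -> A :|: B \in run R s ->
  A != set0 -> B != set0 -> [disjoint A & B] -> ~~ ee B A ->
  valid (splitS R A B) s /\ run (splitS R A B) s = splitS (run R s) A B.
Proof.
elim: s R => [|[X Y] s IH] R; first by [].
move=> hv hp hC hCr hA0 hB0 hd nBA; rewrite run_cons /= in hCr.
move: hv; rewrite valid_cons /= => /and3P[hq hacy hv]; have hq' := hq; move: hq' => /and4P[hX hY nXY eXY].
set C := A :|: B in hC hCr *.
have hdXY : [disjoint X & Y] := hp.2 _ _ hX hY nXY.
have hpM := merge_part hp hX hY nXY.
have nXC : X != C.
  apply/negP => /eqP eXC; move: hCr; rewrite -eXC.
  apply/negP; apply: gone => //; first exact: subsetUl.
  apply: neq_union hdXY; exact: hp.1 _ hY.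
have nYC : Y != C.
  apply/negP => /eqP eYC; move: hCr; rewrite -eYC.
  apply/negP; apply: gone => //; first exact: subsetUr.
  rewrite setUC; apply: neq_union; [exact: hp.1 _ hX | by rewrite disjoint_sym].
have hCM : C \in mrg R X Y by rewrite mrgE eq_sym nYC eq_sym nXC hC.
have nAC : A != C := neq_union hB0 hd.
have nBC : B != C by rewrite /C setUC; apply: neq_union hA0 _; rewrite disjoint_sym.
have AnR : A \notin R := sub_notin hp hC (subsetUl _ _) hA0 nAC.
have BnR : B \notin R := sub_notin hp hC (subsetUr _ _) hB0 nBC.
have nUC : X :|: Y != C.
  apply/negP => /eqP eU.
  have hXC : X \subset C by rewrite -eU subsetUl.
  have hd2 := hp.2 _ _ hX hC nXC.
  case/set0Pn: (hp.1 _ hX) => x hx.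
  exact: (disjS hd2 hx (subsetP hXC _ hx)).
have fAX : (A == X) = false by apply/negP => /eqP e; rewrite e hX in AnR.
have fAY : (A == Y) = false by apply/negP => /eqP e; rewrite e hY in AnR.
have fBX : (B == X) = false by apply/negP => /eqP e; rewrite e hX in BnR.
have fBY : (B == Y) = false by apply/negP => /eqP e; rewrite e hY in BnR.
have fAR : (A \in R) = false by apply/negP => h; rewrite h in AnR.
have fBR : (B \in R) = false by apply/negP => h; rewrite h in BnR.
have eM : mrg (splitS R A B) X Y = splitS (mrg R X Y) A B.
  apply/setP => Z; rewrite mrgE !splitSE mrgE.
  have [->|nZA] := eqVneq Z A.
    by rewrite fAX fAY /= !orbT.
  have [->|nZB] := eqVneq Z B.
    by rewrite fBX fBY /= !orbT.
  rewrite !orbF.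
  have [->|nZU] := eqVneq Z (X :|: Y); first by rewrite nUC !orbT.
  rewrite !orbF; by case: (Z != Y); case: (Z != X); case: (Z != C); case: (Z \in R).
have [IH1 IH2] := IH _ hv hpM hCM hCr hA0 hB0 hd nBA.
rewrite eM IH2 IH1 andbT; split => //.
apply/andP; split.
  by rewrite qedgeE !splitSE nXC nYC hX hY nXY /=.
exact: split_acyclic hpM hCM hA0 hB0 hd nBA hacy.
Qed.

Lemma subUd (Z X Y : sT) : Z \subset X :|: Y -> [disjoint Z & X] -> Z \subset Y.
Proof.
move=> /subsetP h hd; apply/subsetP => z hz.
move: (h z hz); rewrite inE => /orP[hx|//]; case: (disjS hd hz hx).
Qed.

Lemma subUd' (Z X Y : sT) : Z \subset X :|: Y -> [disjoint Z & Y] -> Z \subset X.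
Proof. by rewrite setUC; apply: subUd. Qed.

Lemma properU (Y W : sT) : W != set0 -> [disjoint Y & W] -> Y \proper Y :|: W.
Proof.
move=> /set0Pn[w hw] hd; rewrite properE subsetUl /=; apply/negP => /subsetP h.
have := h w; rewrite inE hw orbT => /(_ isT) hwY; exact: (disjS hd hwY hw).
Qed.

Lemma exact_split (U V X Y : sT) : U :|: V = X :|: Y -> U \subset X -> V \subset Y ->
  [disjoint X & Y] -> U = X /\ V = Y.
Proof.
move=> e hU hV hd; split; apply/eqP; rewrite eqEsubset ?hU ?hV /=; apply/subsetP => x hx.
- have : x \in U :|: V by rewrite e inE hx.
  rewrite inE => /orP[//|xv]; case: (disjS hd hx (subsetP hV _ xv)).
- have : x \in U :|: V by rewrite e inE hx orbT.
  rewrite inE => /orP[xu|//]; case: (disjS hd (subsetP hU _ xu) hx).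
Qed.

Lemma two_in_one (U V X Y : sT) : U :|: V = X :|: Y -> U \subset X -> V \subset X ->
  Y != set0 -> [disjoint X & Y] -> False.
Proof.
move=> e hU hV /set0Pn[y hy] hd.
have : y \in U :|: V by rewrite e inE hy orbT.
rewrite inE => /orP[h|h]; [exact: (disjS hd (subsetP hU _ h) hy) | exact: (disjS hd (subsetP hV _ h) hy)].
Qed.

Lemma hit (x : V) (X Y W U U' : sT) : x \in X -> x \in Y :|: W -> Y \subset U -> W \subset U' ->
  [disjoint U & X] -> [disjoint U' & X] -> False.
Proof.
move=> hx; rewrite inE => /orP[h|h] hY hW d1 d2.
  exact: (disjS d1 (subsetP hY _ h) hx).
exact: (disjS d2 (subsetP hW _ h) hx).
Qed.

Lemma no_two (A B D Y W : sT) : A != set0 -> B != set0 -> D != set0 ->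
  [disjoint A & B] -> [disjoint A & D] -> [disjoint B & D] ->
  Y :|: W = (A :|: B) :|: D ->
  [|| Y \subset A, Y \subset B | Y \subset D] -> [|| W \subset A, W \subset B | W \subset D] -> False.
Proof.
move=> /set0Pn[a ha] /set0Pn[b hb] /set0Pn[d hd] dAB dAD dBD e.
have dBA : [disjoint B & A] by rewrite disjoint_sym.
have dDA : [disjoint D & A] by rewrite disjoint_sym.
have dDB : [disjoint D & B] by rewrite disjoint_sym.
have ia : a \in Y :|: W by rewrite e !inE ha.
have ib : b \in Y :|: W by rewrite e !inE hb orbT.
have id : d \in Y :|: W by rewrite e !inE hd orbT.
case/or3P => hY; case/or3P => hW.
- exact: (hit hb ib hY hW).
- exact: (hit hd id hY hW).
- exact: (hit hb ib hY hW).
- exact: (hit hd id hY hW).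
- exact: (hit ha ia hY hW).
- exact: (hit ha ia hY hW).
- exact: (hit hb ib hY hW).
- exact: (hit ha ia hY hW).
- exact: (hit ha ia hY hW).
Qed.

Definition ud (X Y : sT) := (ee X Y && ~~ ee Y X) || (ee Y X && ~~ ee X Y).

Lemma udC X Y : ud X Y = ud Y X.
Proof. by rewrite /ud orbC. Qed.

Lemma tournament (A B D : sT) : ud A B -> ud (A :|: B) D -> ud A D -> ud (A :|: D) B ->
  ud B D -> ud (B :|: D) A -> False.
Proof.
rewrite /ud !eeU1 !eeU2.
by case: (ee A B); case: (ee B A); case: (ee A D); case: (ee D A); case: (ee B D); case: (ee D B).
Qed.

Lemma inside (t : ltree G) (A B D P C : sT) :
  (forall X Y, X \in t -> Y \in t -> lam3 X Y) ->
  C = A :|: B -> P = C :|: D -> A != set0 -> B != set0 -> [disjoint A & B] ->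
  [forall X in t, ~~ ((C \proper X) && (X \proper P))] -> A \in t -> B \in t -> C \in t ->
  forall Z, Z \in t -> Z \proper P -> Z != C -> [|| Z \subset A, Z \subset B | Z \subset D].
Proof.
move=> lamt eC eP hA0 hB0 dAB /forall_inP hbet hA hB hC Z hZ hZP nZC.
subst C P.
case/or3P: (lamt Z _ hZ hC) => [hZC|hCZ|dZC].
- case/or3P: (lamt Z A hZ hA) => [->//|hAZ|dZA].
  + case/or3P: (lamt Z B hZ hB) => [hZB|hBZ|dZB].
    * case/set0Pn: hA0 => a ha; case: (disjS dAB ha (subsetP hZB _ (subsetP hAZ _ ha))).
    * by move: nZC; rewrite eqEsubset hZC /= subUset hAZ hBZ.
    * by rewrite (subUd' hZC dZB).
  + by rewrite (subUd hZC dZA) /= ?orbT.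
- have : A :|: B \proper Z by rewrite properEneq eq_sym nZC.
  by move=> hp; move: (hbet Z hZ); rewrite hp hZP.
- by rewrite (subUd (proper_sub hZP) dZC) /= ?orbT.
Qed.

Lemma fin_part (t t2 : ltree G) (N M D P C C2 P2 : sT) :
  g_acyclic G -> in_TG t2 ->
  C = N :|: M -> P = C :|: D -> N != set0 -> M != set0 -> D != set0 ->
  [disjoint N & M] -> [disjoint N & D] -> [disjoint M & D] ->
  (forall Z, Z \in t -> Z \proper P -> Z != C -> [|| Z \subset N, Z \subset M | Z \subset D]) ->
  (forall Z, (Z \in t2) = (Z == C2) || (Z \in t :\ C)) ->
  C2 = N :|: D -> tedge t2 P2 C2 -> 1 < #|C2| -> P \in t2 ->
  ud N D /\ P2 = P.
Proof.
move=> hg Ht2 eC eP hN0 hM0 hD0 dNM dND dMD ins memb eC2 /and4P[hP2 hC2 pC2 /forall_inP hbet] hc2 hPt2.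
have gen : forall Z, Z \in t2 -> Z != C2 -> Z \in t /\ Z != C.
  move=> Z; rewrite memb => /orP[/eqP->|]; first by rewrite eqxx.
  by rewrite !inE => /andP[a b] _.
have dDN : [disjoint D & N] by rewrite disjoint_sym.
have dDM : [disjoint D & M] by rewrite disjoint_sym.
have dMN : [disjoint M & N] by rewrite disjoint_sym.
have C2P : C2 \proper P.
  rewrite eP eC eC2 properE; apply/andP; split.
    by apply/subsetP => x; rewrite !inE => /orP[->|->]; rewrite ?orbT.
  apply/negP => /subsetP h; case/set0Pn: hM0 => m hm.
  have := h m; rewrite !inE hm orbT /= => /(_ isT) /orP[hn|hd].
    exact: (disjS dNM hn hm).
  exact: (disjS dMD hm hd).
split.
  have [U [W [[hU hW eUW] [dUW U0 W0 udUW]]]] := tg_struct hg Ht2 hC2 hc2.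
  have nUC2 : U != C2.
    apply/negP => /eqP e; case/set0Pn: W0 => w hw.
    have hwU : w \in U by rewrite e -eUW inE hw orbT.
    exact: (disjS dUW hwU hw).
  have nWC2 : W != C2.
    apply/negP => /eqP e; case/set0Pn: U0 => u hu.
    have huW : u \in W by rewrite e -eUW inE hu.
    exact: (disjS dUW hu huW).
  have piece : forall Z, Z \in t2 -> Z != C2 -> Z \subset C2 -> Z != set0 -> Z \subset N \/ Z \subset D.
    move=> Z hZ nZ sZ Z0; have [hZt nZC] := gen Z hZ nZ.
    have pZ : Z \proper P := sub_proper_trans sZ C2P.
    case/or3P: (ins Z hZt pZ nZC) => [->|hZM|->]; [by left| |by right].
    case/set0Pn: Z0 => z hz; have := subsetP sZ z hz; rewrite eC2 inE => /orP[hn|hd].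
      case: (disjS dNM hn (subsetP hZM _ hz)).
    case: (disjS dMD (subsetP hZM _ hz) hd).
  have sU : U \subset C2 by rewrite -eUW subsetUl.
  have sW : W \subset C2 by rewrite -eUW subsetUr.
  have eUW' : U :|: W = N :|: D by rewrite eUW.
  have eUW'' : U :|: W = D :|: N by rewrite eUW setUC.
  case: (piece U hU nUC2 sU U0) => hUp; case: (piece W hW nWC2 sW W0) => hWp.
  - case: (two_in_one eUW' hUp hWp hD0 dND).
  - have [eU eW] := exact_split eUW' hUp hWp dND.
    by move: udUW; rewrite eU eW /ud => ->.
  - have [eU eW] := exact_split eUW'' hUp hWp dDN.
    by move: udUW; rewrite eU eW udC /ud => ->.
  - case: (two_in_one eUW'' hUp hWp hN0 dDN).
have hC20 : C2 != set0 by rewrite eC2 setU_eq0 negb_and hN0.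
case/or3P: (tg_laminar Ht2 hPt2 hP2) => [sPP2|sP2P|dPP2].
- case: (eqVneq P P2) => [//|nPP2].
  have : P \proper P2 by rewrite properEneq nPP2.
  by move=> h; move: (hbet P hPt2); rewrite h C2P.
- case: (eqVneq P2 P) => [//|nP2P].
  have pP2 : P2 \proper P by rewrite properEneq nP2P.
  have nP2C2 : P2 != C2 by apply/negP => /eqP e; rewrite e properxx in pC2.
  have [hP2t nP2C] := gen P2 hP2 nP2C2.
  have sC2 := proper_sub pC2.
  case/set0Pn: hN0 => n hn; case/set0Pn: hD0 => d hd.
  have hnP2 : n \in P2 by apply: (subsetP sC2); rewrite eC2 inE hn.
  have hdP2 : d \in P2 by apply: (subsetP sC2); rewrite eC2 inE hd orbT.
  case/or3P: (ins P2 hP2t pP2 nP2C) => hs.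
  + case: (disjS dND (subsetP hs _ hdP2) hd).
  + case: (disjS dNM hn (subsetP hs _ hnP2)).
  + case: (disjS dND hn (subsetP hs _ hnP2)).
- case/set0Pn: hC20 => c hc.
  case: (disjS dPP2 (subsetP (proper_sub C2P) _ hc) (subsetP (proper_sub pC2) _ hc)).
Qed.

Lemma complement (Y X U : sT) : Y :|: X = X :|: U -> [disjoint Y & X] -> [disjoint X & U] -> Y = U.
Proof.
move=> e d1 d2; apply/setP => x; apply/idP/idP => hx.
  have : x \in X :|: U by rewrite -e inE hx.
  rewrite inE => /orP[h|//]; case: (disjS d1 hx h).
have : x \in Y :|: X by rewrite e inE hx orbT.
rewrite inE => /orP[//|h]; case: (disjS d2 h hx).
Qed.

Lemma disjU (X Y Z : sT) : [disjoint X & Y] -> [disjoint X & Z] -> [disjoint X & Y :|: Z].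
Proof.
move=> d1 d2; apply/disjP => x hx; rewrite inE => /orP[h|h]; [exact: disjS d1 hx h | exact: disjS d2 hx h].
Qed.

Lemma analysis (t t2 : ltree G) (A B D P C C2 P2 : sT) :
  g_acyclic G -> in_TG t -> in_TG t2 -> t2 <> t ->
  C = A :|: B -> P = C :|: D -> A != set0 -> B != set0 -> D != set0 ->
  [disjoint A & B] -> [disjoint A & D] -> [disjoint B & D] ->
  A \in t -> B \in t -> C \in t -> D \in t -> P \in t -> 1 < #|P| ->
  [forall X in t, ~~ ((C \proper X) && (X \proper P))] ->
  internal_edge t2 P2 C2 -> contract t C = contract t2 C2 ->
  exists N M, [/\ (N = A /\ M = B) \/ (N = B /\ M = A), C2 = N :|: D, P2 = P,
    (forall Z, (Z \in t2) = (Z == C2) || (Z \in t :\ C)) & ud N D && ud (N :|: D) M].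
Proof.
move=> hg Ht Ht2 nt eC eP hA0 hB0 hD0 dAB dAD dBD hA hB hC hD hP hPc hbet /andP[/andP[hte hc2] _] Hcon.
have hte' := hte; move/and4P: hte' => [hP2 hC2 pC2 _].
rewrite /contract in Hcon.
have ins := inside (tg_laminar Ht) eC eP hA0 hB0 dAB hbet hA hB hC.
have dCD : [disjoint C & D].
  by rewrite eC; apply/disjP => x; rewrite inE => /orP[h|h] hd; [exact: disjS dAD h hd | exact: disjS dBD h hd].
have hC0 : C != set0 by rewrite eC setU_eq0 negb_and hA0.
have nC2t : C2 \notin t.
  apply/negP => hC2t; case: (eqVneq C2 C) => [e|ne].
    apply: nt; apply/setP => Z; case: (eqVneq Z C) => [->|nZC]; first by rewrite -{1}e hC2 hC.
    have hz : (Z \in t :\ C) = (Z \in t2 :\ C2) by rewrite Hcon.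
    by move: hz; rewrite !inE e nZC.
  have : C2 \in t :\ C by rewrite !inE ne hC2t.
  by rewrite Hcon !inE eqxx.
have memb : forall Z, (Z \in t2) = (Z == C2) || (Z \in t :\ C).
  by move=> Z; case: (eqVneq Z C2) => [->|n]; [rewrite hC2 | rewrite Hcon !inE n].
have gen : forall Z, Z \in t2 -> Z != C2 -> Z \in t /\ Z != C.
  move=> Z; rewrite memb => /orP[/eqP->|]; first by rewrite eqxx.
  by rewrite !inE => /andP[a b] _.
have toT2 : forall Z, Z \in t -> Z != C -> Z \in t2.
  by move=> Z hZ nZ; rewrite memb !inE nZ hZ orbT.
have nAC : A != C by rewrite eC; apply: neq_union hB0 dAB.
have nBC : B != C by rewrite eC setUC; apply: neq_union hA0 _; rewrite disjoint_sym.
have nDC : D != C by apply: neq_disj hD0 _; rewrite disjoint_sym.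
have CP : C \proper P by rewrite eP; apply: properU.
have nPC : P != C by apply/negP => /eqP e; rewrite e properxx in CP.
have hPt2 := toT2 P hP nPC.
have dDC : [disjoint D & C] by rewrite disjoint_sym.
have AP : A \proper P.
  rewrite eP eC -setUA; apply: properU; first by rewrite setU_eq0 negb_and hB0.
  exact: disjU.
have BP : B \proper P.
  rewrite eP eC [A :|: B]setUC -setUA; apply: properU; first by rewrite setU_eq0 negb_and hA0.
  by apply: disjU => //; rewrite disjoint_sym.
have DP : D \proper P by rewrite eP setUC; apply: properU.
have insBA : forall Z, Z \in t -> Z \proper P -> Z != C -> [|| Z \subset B, Z \subset A | Z \subset D].
  by move=> Z h1 h2 h3; rewrite orbCA ins.
have key : forall Y W, Y \in t2 -> W \in t2 -> Y :|: W = P -> [disjoint Y & W] -> Y != set0 ->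
    W != set0 -> ud Y W -> Y = C2 ->
    exists N M, [/\ (N = A /\ M = B) \/ (N = B /\ M = A), C2 = N :|: D, P2 = P,
     (forall Z, (Z \in t2) = (Z == C2) || (Z \in t :\ C)) & ud N D && ud (N :|: D) M].
  move=> Y W hY hW eYW dYW Y0 W0 udYW eY.
  have nWC2 : W != C2.
    apply/negP => /eqP e; case/set0Pn: W0 => w hw.
    have hwY : w \in Y by rewrite eY -e.
    exact: (disjS dYW hwY hw).
  have [hWt nWC] := gen W hW nWC2.
  have WP : W \proper P by rewrite -eYW setUC; apply: properU => //; rewrite disjoint_sym.
  have fill : forall M0, M0 \in t -> M0 != C -> M0 \proper P -> W \subset M0 -> W = M0.
    move=> M0 hM0 nM0 pM0 sWM; have hM02 := toT2 M0 hM0 nM0.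
    apply/eqP; rewrite eqEsubset sWM /=.
    case/or3P: (tg_laminar Ht2 hC2 hM02) => [s1|s2|d].
    - have : P \subset M0 by rewrite -eYW subUset eY s1 sWM.
      by move=> h; move: pM0; rewrite properE h andbF.
    - case/set0Pn: W0 => w hw; rewrite -eY in s2.
      case: (disjS dYW (subsetP s2 _ (subsetP sWM _ hw)) hw).
    - apply: (@subUd M0 Y W); first by have := proper_sub pM0; rewrite -eYW.
      by rewrite eY disjoint_sym.
  case/or3P: (ins W hWt WP nWC) => hWp.
  - have eWA := fill A hA nAC AP hWp.
    have eC2 : C2 = B :|: D.
      apply: (complement (X := A)); last by apply: disjU => //.
        by rewrite -eY -{1}eWA eYW eP eC setUA.
      by rewrite -eY -eWA.
    have dBA : [disjoint B & A] by rewrite disjoint_sym.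
    have [udBD eP2] := fin_part hg Ht2 (etrans eC (setUC A B)) eP hB0 hA0 hD0
      dBA dBD dAD insBA memb eC2 hte hc2 hPt2.
    exists B, A; split => //; first by right.
    by rewrite udBD -eC2 -eY -eWA udYW.
  - have eWB := fill B hB nBC BP hWp.
    have eC2 : C2 = A :|: D.
      apply: (complement (X := B)); last by apply: disjU => //; rewrite disjoint_sym.
        by rewrite -eY -{1}eWB eYW eP eC setUA [B :|: A]setUC.
      by rewrite -eY -eWB.
    have [udAD eP2] := fin_part hg Ht2 eC eP hA0 hB0 hD0 dAB dAD dBD ins memb eC2 hte hc2 hPt2.
    exists A, B; split => //; first by left.
    by rewrite udAD -eC2 -eY -eWB udYW.
  - have eWD := fill D hD nDC DP hWp.
    have eC2 : C2 = C.
      apply: (complement (X := D)) => //.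
        by rewrite -eY -{1}eWD eYW eP setUC.
      by rewrite -eY -eWD.
    by move: nC2t; rewrite eC2 hC.
have [Y [W [[hY hW eYW] [dYW Y0 W0 udYW]]]] := tg_struct hg Ht2 hPt2 hPc.
have udYW' : ud Y W by rewrite /ud udYW.
case: (eqVneq Y C2) => [eY|nY]; first exact: (key Y W).
case: (eqVneq W C2) => [eW|nW].
  apply: (key W Y) => //; first by rewrite setUC.
  - by rewrite disjoint_sym.
  - by rewrite udC.
have [hYt nYC] := gen Y hY nY.
have [hWt nWC] := gen W hW nW.
have YP : Y \proper P by rewrite -eYW; apply: properU.
have WP : W \proper P by rewrite -eYW setUC; apply: properU => //; rewrite disjoint_sym.
case: (no_two hA0 hB0 hD0 dAB dAD dBD (etrans eYW (etrans eP (congr1 (fun X => X :|: D) eC)))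
  (ins Y hYt YP nYC) (ins W hWt WP nWC)).
Qed.

Lemma mrg2 (K : {set sT}) (U W : sT) : U \notin K -> W \notin K ->
  mrg (K :|: [set U; W]) U W = K :|: [set U :|: W].
Proof.
move=> hU hW; apply/setP => Z; rewrite mrgE !inE.
case: (eqVneq Z U) => [->|nU]; first by rewrite (negbTE hU) /= andbF.
case: (eqVneq Z W) => [->|nW]; first by rewrite (negbTE hW) /=.
by rewrite /= !orbF.
Qed.

Lemma mrg3 (K : {set sT}) (X Y R0 : sT) : X \notin K -> Y \notin K -> X != R0 -> Y != R0 ->
  mrg (K :|: [set X; Y; R0]) X Y = K :|: [set X :|: Y; R0].
Proof.
move=> hX hY nX nY; apply/setP => Z; rewrite mrgE !inE.
case: (eqVneq Z X) => [->|nZX]; first by rewrite (negbTE hX) (negbTE nX) /= ?andbF /= ?orbF.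
case: (eqVneq Z Y) => [->|nZY]; first by rewrite (negbTE hY) (negbTE nY) /= ?andbF /= ?orbF.
rewrite /=; by case: (Z \in K); case: (Z == X :|: Y); case: (Z == R0).
Qed.

Lemma splitK (K : {set sT}) (P x y : sT) : P \notin K -> x :|: y = P ->
  splitS (K :|: [set P]) x y = K :|: [set x; y].
Proof.
move=> hP e; apply/setP => Z; rewrite splitSE e !inE.
case: (eqVneq Z P) => [->|nZ]; first by rewrite (negbTE hP).
by rewrite /=; case: (Z \in K).
Qed.

Lemma plan (K : {set sT}) (X Y R0 x2 y2 P : sT) :
  x2 :|: y2 = P ->
  part (K :|: [set P]) -> q_acyclic (K :|: [set P]) -> P \notin K -> X \notin K -> Y \notin K ->
  X != R0 -> Y != R0 -> X != Y -> ee X Y ->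
  [set X :|: Y; R0] = [set x2; y2] -> x2 != set0 -> y2 != set0 -> [disjoint x2 & y2] ->
  ee x2 y2 -> ~~ ee y2 x2 ->
  valid (K :|: [set X; Y; R0]) [:: (X, Y); (x2, y2)] /\
  run (K :|: [set X; Y; R0]) [:: (X, Y); (x2, y2)] = K :|: [set P].
Proof.
move=> eP hp hacy hPK hX hY nX nY nXY eXY e2 hx0 hy0 dxy exy nyx.
have hPS : P \in K :|: [set P] by rewrite !inE eqxx orbT.
have nxP : x2 != P by rewrite -eP; apply: neq_union.
have nyP : y2 != P by rewrite -eP setUC; apply: neq_union hx0 _; rewrite disjoint_sym.
have sx : x2 \subset P by rewrite -eP subsetUl.
have sy : y2 \subset P by rewrite -eP subsetUr.
have xnS : x2 \notin K :|: [set P] := sub_notin hp hPS sx hx0 nxP.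
have ynS : y2 \notin K :|: [set P] := sub_notin hp hPS sy hy0 nyP.
have xnK : x2 \notin K by move: xnS; rewrite !inE negb_or => /andP[].
have ynK : y2 \notin K by move: ynS; rewrite !inE negb_or => /andP[].
have nxy : x2 != y2 := neq_disj hx0 dxy.
have e1 : mrg (K :|: [set X; Y; R0]) X Y = K :|: [set x2; y2] by rewrite mrg3 // e2.
have e3 : mrg (K :|: [set x2; y2]) x2 y2 = K :|: [set P] by rewrite mrg2 // eP.
rewrite /run /=.
rewrite e1 e3 hacy andbT; split => //.
apply/and3P; split.
- by rewrite qedgeE nXY eXY !inE !eqxx /= !orbT.
- by rewrite -(splitK hPK eP); apply: split_acyclic => //; rewrite eP.
- by rewrite qedgeE nxy exy !inE !eqxx /= !orbT.
Qed.

Lemma final_steps (Q : {set sT}) (A B D : sT) (p : sT * sT) :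
  part Q -> A :|: B \in Q -> D \in Q -> A :|: B != D ->
  A != set0 -> B != set0 -> [disjoint A & B] -> ee A B -> ~~ ee B A ->
  (p = (A :|: B, D) \/ p = (D, A :|: B)) -> ee p.1 p.2 -> ~~ ee p.2 p.1 ->
  q_acyclic (mrg Q p.1 p.2) ->
  exists N x y, [/\ N = A \/ N = B, x.1 :|: x.2 = N :|: D, y.1 :|: y.2 = p.1 :|: p.2,
    valid (splitS Q A B) [:: x; y] & run (splitS Q A B) [:: x; y] = mrg Q p.1 p.2].
Proof.
move=> hp hC hD nCD hA0 hB0 dAB eAB nBA hpc e12 n21 hacy.
set C := A :|: B in hC nCD hpc.
have hD0 : D != set0 := hp.1 _ hD.
have dCD : [disjoint C & D] := hp.2 _ _ hC hD nCD.
have nAC : A != C := neq_union hB0 dAB.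
have nBC : B != C by rewrite /C setUC; apply: neq_union hA0 _; rewrite disjoint_sym.
have AnQ : A \notin Q := sub_notin hp hC (subsetUl _ _) hA0 nAC.
have BnQ : B \notin Q := sub_notin hp hC (subsetUr _ _) hB0 nBC.
have dAD : [disjoint A & D] := disjointWl (subsetUl _ _) dCD.
have dBD : [disjoint B & D] := disjointWl (subsetUr _ _) dCD.
have dDA : [disjoint D & A] by rewrite disjoint_sym.
have dDB : [disjoint D & B] by rewrite disjoint_sym.
have dBA : [disjoint B & A] by rewrite disjoint_sym.
have nAD : A != D := neq_disj hA0 dAD.
have nBD : B != D := neq_disj hB0 dBD.
have nAB : A != B := neq_disj hA0 dAB.
have nDA : D != A by rewrite eq_sym.
have nDB : D != B by rewrite eq_sym.
have nBA' : B != A by rewrite eq_sym.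
pose K := Q :\ C :\ D.
have Kmem : forall Z, (Z \in K) = [&& Z != D, Z != C & Z \in Q] by move=> Z; rewrite !inE.
have Tmem : forall Z, (Z \in splitS Q A B) = [|| Z \in K, Z == A, Z == B | Z == D].
  move=> Z; rewrite splitSE Kmem.
  case: (eqVneq Z D) => [->|nZD]; first by rewrite hD eq_sym nCD /= !orbT.
  by rewrite /= !orbF.
have [P eP] : {P | P = p.1 :|: p.2} by exists (p.1 :|: p.2).
have S3mem : forall Z, (Z \in mrg Q p.1 p.2) = (Z \in K) || (Z == P).
  move=> Z; rewrite mrgE Kmem eP.
  case: hpc => -> //=.
  by case: (Z != C); case: (Z != D).
clearbody K.
have hpS3 : part (mrg Q p.1 p.2).
  case: hpc => -> /=; apply: merge_part => //; by rewrite eq_sym.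
have eS3 : mrg Q p.1 p.2 = K :|: [set P] by apply/setP => Z; rewrite S3mem !inE.
have AnK : A \notin K by rewrite Kmem (negbTE AnQ) !andbF.
have BnK : B \notin K by rewrite Kmem (negbTE BnQ) !andbF.
have DnK : D \notin K by rewrite Kmem eqxx.
have PnK : P \notin K.
  rewrite Kmem; apply/negP => /and3P[_ nPC hPQ].
  have dd := hp.2 _ _ hPQ hC nPC.
  case/set0Pn: hA0 => a ha.
  have haP : a \in P by case: hpc => e; rewrite eP e /= !inE ha /= ?orbT.
  have haC : a \in C by rewrite /C inE ha.
  exact: (disjS dd haP haC).
rewrite eS3 in hacy hpS3; rewrite eS3 -eP.
have eCD : ee C D = ee A D || ee B D by rewrite /C eeU1.
have eDC : ee D C = ee D A || ee D B by rewrite /C eeU2.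
have T1 : forall X Y R0, (forall Z : sT, [|| Z == X, Z == Y | Z == R0] = [|| Z == A, Z == B | Z == D]) ->
    splitS Q A B = K :|: [set X; Y; R0].
  move=> X Y R0 hperm; apply/setP => Z; rewrite Tmem !inE.
  have := hperm Z.
  by case: (Z \in K); case: (Z == X); case: (Z == Y); case: (Z == R0); case: (Z == A); case: (Z == B); case: (Z == D).
have hBD0 : B :|: D != set0 by rewrite setU_eq0 negb_and hB0.
have hAD0 : A :|: D != set0 by rewrite setU_eq0 negb_and hA0.
have hDA0 : D :|: A != set0 by rewrite setU_eq0 negb_and hD0.
have hDB0 : D :|: B != set0 by rewrite setU_eq0 negb_and hD0.
case: hpc => ep; rewrite ep /= in e12 n21 eP; subst P.
- have nDA' : ~~ ee D A by move: n21; rewrite eDC negb_or => /andP[].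
  have nDB' : ~~ ee D B by move: n21; rewrite eDC negb_or => /andP[].
  case: (boolP (ee B D)) => hBD.
  + have eT : splitS Q A B = K :|: [set B; D; A].
      by apply: T1 => Z; case: (Z == A); case: (Z == B); case: (Z == D).
    have eU : A :|: (B :|: D) = C :|: D by rewrite setUA.
    have e2 : [set B :|: D; A] = [set A; B :|: D] by apply/setP => Z; rewrite !inE orbC.
    have f1 : ee A (B :|: D) by rewrite eeU2 eAB.
    have f2 : ~~ ee (B :|: D) A by rewrite eeU1 negb_or nBA nDA'.
    have [hv hr] := @plan K B D A A (B :|: D) (C :|: D) eU hpS3 hacy PnK BnK DnK nBA' nDA nBD hBD e2
      hA0 hBD0 (disjU dAB dAD) f1 f2.
    exists B, (B, D), (A, B :|: D); rewrite eT; split => //; by right.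
  + have hAD : ee A D by move: e12; rewrite eCD (negbTE hBD) orbF.
    have eT : splitS Q A B = K :|: [set A; D; B].
      by apply: T1 => Z; case: (Z == A); case: (Z == B); case: (Z == D).
    have eU : (A :|: D) :|: B = C :|: D by rewrite /C setUAC.
    have f0 : [disjoint A :|: D & B] by rewrite disjoint_sym; apply: disjU.
    have f1 : ee (A :|: D) B by rewrite eeU1 eAB.
    have f2 : ~~ ee B (A :|: D) by rewrite eeU2 negb_or nBA hBD.
    have [hv hr] := @plan K A D B (A :|: D) B (C :|: D) eU hpS3 hacy PnK AnK DnK nAB nDB nAD hAD (erefl _)
      hAD0 hB0 f0 f1 f2.
    exists A, (A, D), (A :|: D, B); rewrite eT; split => //; by left.
- have nCD' : ~~ ee C D := n21.
  have nAD' : ~~ ee A D by move: nCD'; rewrite eCD negb_or => /andP[].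
  have nBD' : ~~ ee B D by move: nCD'; rewrite eCD negb_or => /andP[].
  case: (boolP (ee D A)) => hDA.
  + have eT : splitS Q A B = K :|: [set D; A; B].
      by apply: T1 => Z; case: (Z == A); case: (Z == B); case: (Z == D).
    have eU : (D :|: A) :|: B = D :|: C by rewrite /C setUA.
    have f0 : [disjoint D :|: A & B] by rewrite disjoint_sym; apply: disjU.
    have f1 : ee (D :|: A) B by rewrite eeU1 eAB orbT.
    have f2 : ~~ ee B (D :|: A) by rewrite eeU2 negb_or nBA nBD'.
    have [hv hr] := @plan K D A B (D :|: A) B (D :|: C) eU hpS3 hacy PnK DnK AnK nDB nAB nDA hDA (erefl _)
      hDA0 hB0 f0 f1 f2.
    exists A, (D, A), (D :|: A, B); rewrite eT; split; [by left | exact: setUC | by [] | by [] | by []].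
  + have hDB : ee D B by move: e12; rewrite eDC (negbTE hDA).
    have eT : splitS Q A B = K :|: [set D; B; A].
      by apply: T1 => Z; case: (Z == A); case: (Z == B); case: (Z == D).
    have eU : A :|: (D :|: B) = D :|: C by rewrite /C setUCA.
    have e2 : [set D :|: B; A] = [set A; D :|: B] by apply/setP => Z; rewrite !inE orbC.
    have f1 : ee A (D :|: B) by rewrite eeU2 eAB orbT.
    have f2 : ~~ ee (D :|: B) A by rewrite eeU1 negb_or nBA hDA.
    have [hv hr] := @plan K D B A A (D :|: B) (D :|: C) eU hpS3 hacy PnK DnK BnK nDA nBA' nDB hDB e2
      hA0 hDB0 (disjU dAD dAB) f1 f2.
    exists B, (D, B), (A, D :|: B); rewrite eT; split; [by right | exact: setUC | by [] | by [] | by []].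
Qed.

Lemma child_split (t : ltree G) (X Y P C : sT) :
  (forall X Y, X \in t -> Y \in t -> lam3 X Y) -> X \in t -> Y \in t -> C \in t ->
  P = X :|: Y -> [disjoint X & Y] -> X != set0 -> Y != set0 -> C \proper P ->
  [forall Z in t, ~~ ((C \proper Z) && (Z \proper P))] -> C = X \/ C = Y.
Proof.
move=> lamt hX hY hC eP dXY X0 Y0 CP /forall_inP hbet.
have XP : X \proper P by rewrite eP; apply: properU.
have YP : Y \proper P by rewrite eP setUC; apply: properU => //; rewrite disjoint_sym.
have betw : forall Z, Z \in t -> C \subset Z -> Z \proper P -> C = Z.
  move=> Z hZ sCZ pZ; apply/eqP; apply/negP => /negP nCZ.
  have : C \proper Z by rewrite properEneq nCZ.
  by move=> h; move: (hbet Z hZ); rewrite h pZ.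
case/or3P: (lamt C X hC hX) => [sCX|sXC|dCX].
- by left; apply: betw.
- case/or3P: (lamt C Y hC hY) => [sCY|sYC|dCY].
  + case/set0Pn: X0 => x hx; case: (disjS dXY hx (subsetP sCY _ (subsetP sXC _ hx))).
  + have : P \subset C by rewrite eP subUset sXC sYC.
    by move=> h; move: CP; rewrite properE h andbF.
  + left; apply/eqP; rewrite eqEsubset sXC andbT.
    by apply: (subUd' (Y := Y)) => //; rewrite -eP (proper_sub CP).
- right; apply: betw => //.
  by apply: (subUd (X := X)) => //; rewrite -eP (proper_sub CP).
Qed.

Lemma split_merge (S : {set sT}) (A B : sT) : part S -> A \in S -> B \in S -> A != B ->
  splitS (mrg S A B) A B = S.
Proof.
move=> hp hA hB nAB.
have dAB := hp.2 _ _ hA hB nAB.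
have CnS : A :|: B \notin S.
  apply/negP => hC.
  have nAC : A != A :|: B := neq_union (hp.1 _ hB) dAB.
  have dd := hp.2 _ _ hA hC nAC.
  case/set0Pn: (hp.1 _ hA) => a ha.
  by apply: (disjS dd ha); rewrite inE ha.
apply/setP => Z; rewrite splitSE mrgE.
case: (eqVneq Z A) => [->|nZA]; first by rewrite hA !orbT.
case: (eqVneq Z B) => [->|nZB]; first by rewrite hB !orbT.
rewrite /= !orbF.
case: (eqVneq Z (A :|: B)) => [->|nZC] /=; first by rewrite (negbTE CnS).
by rewrite orbF.
Qed.

Lemma card2 (N D : sT) : N != set0 -> D != set0 -> [disjoint N & D] -> 1 < #|N :|: D|.
Proof.
move=> /set0Pn[n hn] /set0Pn[d hd] dd; apply/card_gt1P; exists n, d; split.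
- by rewrite inE hn.
- by rewrite inE hd orbT.
- by apply/negP => /eqP e; rewrite e in hn; exact: (disjS dd hn hd).
Qed.

End S.

Unset Implicit Arguments.
Set Strict Implicit.
Set Printing Implicit Defensive.

Theorem lemma1 (G : dgraph) (HG : in_calG G) (t : ltree G) (Ht : in_TG t)
  (P C : {set vert G}) (He : internal_edge t P C) :
  exists (t' : ltree G) (P' C' : {set vert G}),
    [/\ in_TG t', t' <> t, internal_edge t' P' C' & contract t C = contract t' C']
    /\ forall (t'' : ltree G) (P'' C'' : {set vert G}),
         [/\ in_TG t'', t'' <> t, internal_edge t'' P'' C''
           & contract t C = contract t'' C''] ->
         [/\ t'' = t', P'' = P' & C'' = C'].
Proof.
have hg : g_acyclic G by case: HG.
move: He => /andP[/andP[hte hCc] hPc].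
have hte' := hte; move/and4P: hte' => [hP hC pCP hbet].
have lamt := tg_laminar Ht.
have net := tg_nonempty Ht.
have Ht0 := Ht; case: Ht0 => s [hs et].
move: hs; rewrite is_cseqE => /andP[hv hfin].
have hPnP0 : P \notin P0 G by apply/negP => /card_P0 h; rewrite h in hPc.
have hPF : P \in F (P0 G) s by rewrite -tree_ofE et.
have [sa [[p1 p2] [s3 [es /= eP]]]] := find_step hPF hPnP0.
rewrite es in hv hfin et.
have [[hpQ hp1 hp2 hp12] [[e12 n21] [f1 f2]]] := step_props hv (P0_part G) (P0_nocyc hg).
rewrite /= in hp1 hp2 hp12 e12 n21 f1 f2.
rewrite -tree_ofE et in f1 f2.
have dp12 : [disjoint p1 & p2] := hpQ.2 _ _ hp1 hp2 hp12.
have hCp : C = p1 \/ C = p2.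
  exact: (child_split lamt f1 f2 hC eP dp12 (hpQ.1 _ hp1) (hpQ.1 _ hp2) pCP hbet).
move: hv; rewrite valid_cat => /andP[hva hvp].
move: hvp; rewrite valid_cons /= => /and3P[hqp hacyp hv3].
set Q := run (P0 G) sa.
have [D [hpc eP' hCQ hDQ nCD]] : exists D, [/\ (p1, p2) = (C, D) \/ (p1, p2) = (D, C),
    P = C :|: D, C \in Q, D \in Q & C != D].
  case: hCp => ->; [exists p2 | exists p1]; split => //.
  - by left.
  - by right.
  - by rewrite eP setUC.
  - by rewrite eq_sym.
have hCc' := hCc.
have hCnP0 : C \notin P0 G by apply/negP => /card_P0 h; rewrite h in hCc'.
have hCF : C \in F (P0 G) sa := subsetP (run_subF _ _) _ hCQ.
have [s1 [[A B] [s2 [esa /= eC]]]] := find_step hCF hCnP0.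
have hva' := hva; rewrite esa in hva'.
have [[hpS hA hB hAB] [[eAB nBA] [fA fB]]] := step_props hva' (P0_part G) (P0_nocyc hg).
rewrite /= in hA hB hAB eAB nBA fA fB.
move: hva'; rewrite valid_cat valid_cons /= => /andP[hv1 /and3P[hqAB hacyAB hv2]].
set S := run (P0 G) s1.
have eQ : Q = run (mrg S A B) s2 by rewrite /Q esa run_cat run_cons.
have hA0 : A != set0 := hpS.1 _ hA.
have hB0 : B != set0 := hpS.1 _ hB.
have dAB : [disjoint A & B] := hpS.2 _ _ hA hB hAB.
have hD0 : D != set0 := hpQ.1 _ hDQ.
have dCD : [disjoint C & D] := hpQ.2 _ _ hCQ hDQ nCD.
have dAD : [disjoint A & D] by apply: disjointWl dCD; rewrite eC subsetUl.
have dBD : [disjoint B & D] by apply: disjointWl dCD; rewrite eC subsetUr.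
have FsaT : F (P0 G) sa \subset t by rewrite -et tree_ofE; apply: F_cat_l.
have hAt : A \in t by apply: (subsetP FsaT); rewrite esa.
have hBt : B \in t by apply: (subsetP FsaT); rewrite esa.
have hCt := hC.
have hDt : D \in t by case: hpc => [[_ <-]|[<- _]].
have hPt := hP.
have ins := inside lamt eC eP' hA0 hB0 dAB hbet hAt hBt hCt.
have hS1 : A :|: B \in mrg S A B by rewrite mrgE eqxx orbT.
have hpS1 : part (mrg S A B) := merge_part hpS hA hB hAB.
have hCQ' : A :|: B \in run (mrg S A B) s2 by rewrite -eQ -eC.
have [hvs hrs] := split_run hv2 hpS1 hS1 hCQ' hA0 hB0 dAB nBA.
rewrite split_merge // in hvs hrs.
rewrite -eQ in hrs.
have hCQ'' : A :|: B \in Q by rewrite -eC.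
have nCD' : A :|: B != D by rewrite -eC.
have hpc' : (p1, p2) = (A :|: B, D) \/ (p1, p2) = (D, A :|: B) by rewrite -eC.
have [N [x [y [hN ex ey hvxy hrxy]]]] := final_steps hpQ hCQ'' hDQ nCD' hA0 hB0 dAB eAB nBA hpc' e12 n21 hacyp.
rewrite /= in ey.
pose s' := s1 ++ s2 ++ x :: y :: s3.
have hs' : is_cseq (P0 G) s'.
  have exy : x :: y :: s3 = [:: x; y] ++ s3 by [].
  rewrite is_cseqE /s' exy valid_cat hv1 andTb -/S valid_cat hvs andTb hrs valid_cat hvxy andTb hrxy hv3 andTb.
  by rewrite !run_cat -/S hrs hrxy; move: hfin; rewrite run_cat run_cons.
pose mp (l : seq ({set vert G} * {set vert G})) := [seq q.1 :|: q.2 | q <- l].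
pose Kb Z := [|| Z \in P0 G, Z \in mp s1, Z \in mp s2, Z == P | Z \in mp s3].
have memt : forall Z, (Z \in t) = Kb Z || (Z == C).
  move=> Z; rewrite -et esa tree_ofE /F !inE !map_cat !mem_cat /= !in_cons -eC -eP /Kb.
  by case: (Z \in P0 G); case: (Z \in mp s1); case: (Z \in mp s2); case: (Z == P); case: (Z \in mp s3); case: (Z == C).
set t' := tree_of s'.
set C' := N :|: D.
have memt' : forall Z, (Z \in t') = Kb Z || (Z == C').
  move=> Z; rewrite /t' /s' tree_ofE /F !inE !map_cat !mem_cat /= !in_cons ex ey -eP /Kb.
  by case: (Z \in P0 G); case: (Z \in mp s1); case: (Z \in mp s2); case: (Z == P); case: (Z \in mp s3); case: (Z == C').
have [M hNM] : exists M, (N = A /\ M = B) \/ (N = B /\ M = A).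
  by case: hN => ->; [exists B; left | exists A; right].
have [hN0 hM0 dNM dND dMD] : [/\ N != set0, M != set0, [disjoint N & M], [disjoint N & D] & [disjoint M & D]].
  by case: hNM => [[-> ->]|[-> ->]]; split => //; rewrite disjoint_sym.
have eCNM : C = N :|: M by case: hNM => [[-> ->]|[-> ->]] //; rewrite setUC.
have insNM : forall Z, Z \in t -> Z \proper P -> Z != C -> [|| Z \subset N, Z \subset M | Z \subset D].
  move=> Z h1 h2 h3; have := ins Z h1 h2 h3.
  by case: hNM => [[-> ->]|[-> ->]] //; rewrite orbCA.
have hC'0 : C' != set0 by rewrite /C' setU_eq0 negb_and hN0.
have CP' : C' \proper P.
  rewrite properE; apply/andP; split.
    apply/subsetP => z; rewrite /C' eP' eCNM !inE => /orP[->|->]; by rewrite ?orbT.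
  apply/negP => /subsetP h; case/set0Pn: hM0 => m hm.
  have : m \in P by rewrite eP' eCNM !inE hm orbT.
  move/h; rewrite /C' inE => /orP[hn|hd]; [exact: (disjS dNM hn hm) | exact: (disjS dMD hm hd)].
have nC'C : C' != C.
  apply/negP => /eqP e; case/set0Pn: hD0 => d hd.
  have : d \in C by rewrite -e /C' inE hd orbT.
  move=> hdC; exact: (disjS dCD hdC hd).
have C'nt : C' \notin t.
  apply/negP => h; case/set0Pn: hN0 => n hn; case/set0Pn: hD0 => d hd.
  have hnC' : n \in C' by rewrite /C' inE hn.
  have hdC' : d \in C' by rewrite /C' inE hd orbT.
  case/or3P: (insNM C' h CP' nC'C) => hs.
  - exact: (disjS dND (subsetP hs _ hdC') hd).
  - exact: (disjS dNM hn (subsetP hs _ hnC')).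
  - exact: (disjS dND hn (subsetP hs _ hnC')).
have Ht' : in_TG t' by exists s'.
have hC't' : C' \in t' by rewrite memt' eqxx orbT.
have Cnt' : C \notin t'.
  apply/negP => h; case/or3P: (tg_laminar Ht' h hC't') => [sCC'|sC'C|dd].
  - case/set0Pn: hM0 => m hm.
    have : m \in C' by apply: (subsetP sCC'); rewrite eCNM inE hm orbT.
    rewrite /C' inE => /orP[hn|hd]; [exact: (disjS dNM hn hm) | exact: (disjS dMD hm hd)].
  - case/set0Pn: hD0 => d hd.
    have : d \in C by apply: (subsetP sC'C); rewrite /C' inE hd orbT.
    move=> hdC; exact: (disjS dCD hdC hd).
  - case/set0Pn: hN0 => n hn.
    have hnC : n \in C by rewrite eCNM inE hn.
    have hnC' : n \in C' by rewrite /C' inE hn.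
    exact: (disjS dd hnC hnC').
have nt' : t' <> t by move=> e; move: hC't'; rewrite e (negbTE C'nt).
have hcon : contract t C = contract t' C'.
  apply/setP => Z; rewrite /contract !in_setD1.
  case: (eqVneq Z C) => [->|nZC]; first by rewrite (negbTE Cnt') andbF.
  case: (eqVneq Z C') => [->|nZC']; first by rewrite (negbTE C'nt).
  by rewrite memt memt' (negbTE nZC) (negbTE nZC').
have hie : internal_edge t' P C'.
  rewrite /internal_edge hPc (card2 hN0 hD0 dND) !andbT.
  apply/and4P; split.
  - by rewrite memt' /Kb eqxx !orbT.
  - exact: hC't'.
  - exact: CP'.
  - apply/forall_inP => X hX; apply/negP => /andP[pC'X pXP].
    have nXC' : X != C' by apply/negP => /eqP e; rewrite e properxx in pC'X.
    have hXt : X \in t by rewrite memt; move: hX; rewrite memt' (negbTE nXC') orbF => ->.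
    have nXC : X != C by apply/negP => /eqP e; rewrite -e hX in Cnt'.
    have sC'X := proper_sub pC'X.
    case/set0Pn: hN0 => n hn; case/set0Pn: hD0 => d hd.
    have hnX : n \in X by apply: (subsetP sC'X); rewrite /C' inE hn.
    have hdX : d \in X by apply: (subsetP sC'X); rewrite /C' inE hd orbT.
    case/or3P: (insNM X hXt pXP nXC) => hs.
    + exact: (disjS dND (subsetP hs _ hdX) hd).
    + exact: (disjS dNM hn (subsetP hs _ hnX)).
    + exact: (disjS dND hn (subsetP hs _ hnX)).
exists t', P, C'; split; first by split.
move=> t'' P'' C'' [Ht'' nt'' hie'' hcon''].
have [N1 [M1 [hNM1 eC1 eP1 memb1 ud1]]] := analysis hg Ht Ht' nt' eC eP' hA0 hB0 hD0 dAB dAD dBD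
  hAt hBt hCt hDt hPt hPc hbet hie hcon.
have [N2 [M2 [hNM2 eC2 eP2 memb2 ud2]]] := analysis hg Ht Ht'' nt'' eC eP' hA0 hB0 hD0 dAB dAD dBD
  hAt hBt hCt hDt hPt hPc hbet hie'' hcon''.
case: (eqVneq N1 N2) => [eN|nN].
  have eCC : C'' = C' by rewrite eC2 eC1 eN.
  split => //; apply/setP => Z; by rewrite memb2 memb1 eCC.
have udAB : ud A B by rewrite /ud eAB nBA.
have udCD : ud (A :|: B) D.
  case: hpc' => [[q1 q2]|[q1 q2]]; rewrite q1 q2 in e12 n21; first by rewrite /ud e12 n21.
  by rewrite udC /ud e12 n21.
exfalso.
case: hNM1 => [[e1 f1']|[e1 f1']]; case: hNM2 => [[e2 f2']|[e2 f2']]; subst N1 M1 N2 M2.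
- by rewrite eqxx in nN.
- move/andP: ud1 => [u1 u2]; move/andP: ud2 => [u3 u4].
  exact: (tournament udAB udCD u1 u2 u3 u4).
- move/andP: ud1 => [u1 u2]; move/andP: ud2 => [u3 u4].
  exact: (tournament udAB udCD u3 u4 u1 u2).
- by rewrite eqxx in nN.
Qed.
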